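(* Let $G$ be a layered graph over $\Sigma_{in}$ of depth $n$ and $\mathsf{C}$ a $(G,\Sigma_{out})$-code. Fix $w\in\Sigma_{out}^n$ and $\epsilon>0$. For any subset $S\subseteq L(\mathsf{C},w,\epsilon)$, there is a prefix tree of $S$.
   Context: A layered graph over alphabet $\Sigma$ of depth $n$ is a directed graph whose vertices are partitioned into layers $0,1,\dots,n$, with exactly one vertex (the root) in layer $0$, and where each vertex in layer $i<n$ has exactly $|\Sigma|$ out-edges to vertices in layer $i+1$, the out-edges being labeled by the distinct elements of $\Sigma$ (the endpoints need not be distinct). A string $p\in\Sigma_{in}^i$ determines a unique path from the root to layer $i$; $v(p)$ is its endpoint. A $(G,\Sigma_{out})$-code $\mathsf{C}$ is an assignment of an element of $\Sigma_{out}$ to each edge of $G$; $\mathsf{C}(p)\in\Sigma_{out}^i$ is the string of labels along the path $p$. For $x,y\in\Sigma^m$, $\Delta$ is Hamming distance and the suffix distance is $\Delta_{sfx}(x,y)=\max_{0\le i\le m-1}\frac{\Delta(x[i+1:m],y[i+1:m])}{m-i}$. Define $L_i(\mathsf{C},w,\epsilon)=\{v(p): p\in\Sigma_{in}^i,\ \Delta_{sfx}(\mathsf{C}(p),w[1:i])<1-\epsilon\}$ and $L(\mathsf{C},w,\epsilon)=\bigcup_{i=1}^n L_i(\mathsf{C},w,\epsilon)$. For $S\subseteq L(\mathsf{C},w,\epsilon)$, a prefix tree of $S$ is a union of paths $p(v)$, one for each $v\in S$, where $p(v)$ goes from the root to $v$ and satisfies $\Delta_{sfx}(\mathsf{C}(p(v)),w[1:|p(v)|])<1-\epsilon$,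 such that this union forms a rooted tree. *)

(* Defs.v *)
From HB Require Import structures.
From mathcomp Require Import all_boot all_order all_algebra.
Set Implicit Arguments. Unset Strict Implicit. Unset Printing Implicit Defensive.
Import Order.TTheory GRing.Theory Num.Theory.

(* Vertices carry a
   layer in {0,..,n}; the root is the unique vertex of layer 0; every vertex v
   of layer < n has exactly |Sin| out-edges, one labelled by each a : Sin,
   namely the edge (v,a) going to [next v a], which lies in layer (layer v)+1.
   (Endpoints of different edges need not be distinct.)  The out-edges of
   layer-n vertices are irrelevant ([next] is total for convenience). *)
Record layered_graph (Sin : finType) (n : nat) := LayeredGraph {
  vtx : Type;
  layer : vtx -> nat;
  root : vtx;
  next : vtx -> Sin -> vtx;
  layer_root : layer root = 0;
  root_unique : forall v, layer v = 0 -> v = root;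
  layer_le : forall v, layer v <= n;
  layer_next : forall v a, layer v < n -> layer (next v a) = (layer v).+1
}.

Section Defs.
Variables (Sin : finType) (Sout : eqType) (n : nat) (G : layered_graph Sin n).

Definition code := vtx G -> Sin -> Sout.

Definition vend (p : seq Sin) : vtx G := foldl (@next _ _ G) (root G) p.

Fixpoint enc_from (C : code) (v : vtx G) (p : seq Sin) : seq Sout :=
  match p with
  | [::] => [::]
  | a :: p' => C v a :: enc_from C (@next _ _ G v a) p'
  end.
Definition enc (C : code) (p : seq Sin) := enc_from C (root G) p.
End Defs.

Definition hamming (T : eqType) (x y : seq T) : nat :=
  count (fun xy : T * T => xy.1 != xy.2) (zip x y).

(* Suffix distance for x,y of length m:
   max_{0<=i<=m-1} Delta(x[i+1:m], y[i+1:m]) / (m-i)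
   (x[i+1:m] is drop i x in 0-based indexing).  All terms are >= 0, so the
   maximum is taken with neutral element 0 (the statement only uses m >= 1). *)
Definition sfx_dist (R : realFieldType) (T : eqType) (x y : seq T) : R :=
  \big[Num.max/0%R]_(i < size x)
     ((hamming (drop i x) (drop i y))%:R / (size x - i)%:R)%R.

Section L.
Variables (R : realFieldType) (Sin : finType) (Sout : eqType) (n : nat)
          (G : layered_graph Sin n) (C : code Sout G) (w : seq Sout) (eps : R).

Definition good_path (p : seq Sin) : Prop :=
  (sfx_dist R (enc C p) (take (size p) w) < 1 - eps)%R.

Definition inLi (i : nat) (v : vtx G) : Prop :=
  exists p : seq Sin, size p = i /\ vend G p = v /\ good_path p.

Definition inL (v : vtx G) : Prop := exists i, 1 <= i <= n /\ inLi i v.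

Definition in_union (S : vtx G -> Prop) (P : vtx G -> seq Sin)
  (u : vtx G) (a : Sin) : Prop :=
  exists v, S v /\ exists q, prefix (rcons q a) (P v) /\ u = vend G q.

Definition path_in_union S P (p : seq Sin) : Prop :=
  forall q a, prefix (rcons q a) p -> in_union S P (vend G q) a.

(* The union of the chosen paths forms a tree rooted at the root: every vertex
   of the union is reached from the root by exactly one path inside the union
   (existence is automatic, each vertex lying on some chosen path). *)
Definition union_is_rooted_tree S P : Prop :=
  forall p1 p2, path_in_union S P p1 -> path_in_union S P p2 ->
    vend G p1 = vend G p2 -> p1 = p2.

Definition prefix_tree S (P : vtx G -> seq Sin) : Prop :=
  (forall v, S v -> vend G (P v) = v /\ good_path (P v)) /\
  union_is_rooted_tree S P.
End L.

(* Main.v *)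
Require Import Defs.
From HB Require Import structures.
From mathcomp Require Import all_boot all_order all_algebra.
From mathcomp Require Import lra.
From Stdlib Require Import ClassicalEpsilon.
Import Order.TTheory GRing.Theory Num.Theory.
Set Implicit Arguments. Unset Strict Implicit. Unset Printing Implicit Defensive.

Definition decP (P : Prop) : bool :=
  if excluded_middle_informative P then true else false.
Lemma decPP (P : Prop) : reflect P (decP P).
Proof. rewrite /decP; case: excluded_middle_informative => h; by constructor. Qed.

Section Reals.
Variable R : realFieldType.
Local Open Scope ring_scope.

Definition pos0 (m : R) : R := if m < 0 then 0 else m.

Definition Afold (s : seq R) : R := foldl (fun m d => d + pos0 m) 0 s.

Lemma Afold_rcons s d : Afold (rcons s d) = d + pos0 (Afold s).
Proof. by rewrite /Afold foldl_rcons. Qed.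

Lemma addmax_lt (d X : R) : (d + pos0 X < 0) = (d < 0) && (d + X < 0).
Proof.
rewrite /pos0; case: ifP => h; apply/idP/andP;
  (try by move=> H; split; lra); case; lra.
Qed.

Lemma sum_rcons (s : seq R) d : \sum_(x <- rcons s d) x = \sum_(x <- s) x + d.
Proof. by rewrite big_rcons. Qed.

Lemma key s d : (d + pos0 (Afold s) < 0) <->
  (forall j, (j <= size s)%N -> \sum_(x <- drop j (rcons s d)) x < 0).
Proof.
elim/last_ind: s d => [|s d' IH] d.
  rewrite /Afold /pos0 /= ltxx addr0; split.
    by move=> h j; rewrite leqn0 => /eqP ->; rewrite drop0 big_seq1.
  by move=> /(_ 0%N (leqnn _)); rewrite drop0 big_seq1.
rewrite Afold_rcons addmax_lt addrA (addrC d d') size_rcons.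
have E j : (j <= size s)%N ->
    \sum_(x <- drop j (rcons (rcons s d') d)) x = \sum_(x <- drop j (rcons s (d' + d))) x.
  move=> hj; rewrite drop_rcons ?size_rcons ?(leq_trans hj) //.
  by rewrite drop_rcons // !sum_rcons drop_rcons // sum_rcons addrA.
have Ed : \sum_(x <- drop (size s).+1 (rcons (rcons s d') d)) x = d.
  by rewrite drop_rcons ?size_rcons // -(size_rcons s d') drop_size big_seq1.
split.
  case/andP=> hd /IH H j; rewrite leq_eqVlt ltnS => /orP[/eqP->|hj].
    by rewrite Ed.
  by rewrite E // H.
move=> H; apply/andP; split; first by rewrite -Ed; apply: H.
apply/IH => j hj; rewrite -E //; apply: H; exact: leqW.
Qed.

Lemma A_neg s : (0 < size s)%N ->
  (Afold s < 0 <-> forall j, (j < size s)%N -> \sum_(x <- drop j s) x < 0).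
Proof.
case/lastP: s => [//|s d] _; rewrite Afold_rcons key size_rcons.
by split => H j hj; apply: H.
Qed.

End Reals.

Lemma max_lt (R : realFieldType) (x y c : R) : (x < c -> y < c -> Num.max x y < c)%R.
Proof. rewrite /Order.max. case: ifP => //. Qed.
Lemma le_maxs (R : realFieldType) (x y : R) : (x <= Num.max x y /\ y <= Num.max x y)%R.
Proof. rewrite /Order.max. case: ifP => h; split => //. by rewrite ltW.
 by rewrite leNgt h. Qed.
Lemma le_bigmaxs (R : realFieldType) (I : eqType) (r : seq I) (F : I -> R) i :
  i \in r -> (F i <= \big[Num.max/0%R]_(j <- r) F j)%R.
Proof.
elim: r => [//|a r IH]; rewrite inE big_cons => /orP[/eqP->|/IH h].
  by case: (@le_maxs _ (F a) (\big[Num.max/0%R]_(j <- r) F j)).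
case: (@le_maxs _ (F a) (\big[Num.max/0%R]_(j <- r) F j)) => _ h2; exact: le_trans h h2.
Qed.
Lemma bigmax_ltP (R : realFieldType) m (F : 'I_m -> R) c : (0 < m)%N -> (forall i, 0 <= F i)%R ->
  ((\big[Num.max/0%R]_(i < m) F i < c)%R <-> forall i, (F i < c)%R).
Proof.
move=> hm F0; split.
  move=> h i; apply: le_lt_trans h; apply: le_bigmaxs; exact: mem_index_enum.
move=> h; apply: (big_ind (fun x => x < c)%R) => //; last by move=> x y; apply: max_lt.
exact: le_lt_trans (F0 (Ordinal hm)) (h _).
Qed.

Lemma drop_zip (S T : Type) j (s : seq S) (t : seq T) :
  drop j (zip s t) = zip (drop j s) (drop j t).
Proof.
have zs0 : forall (s' : seq S), zip s' ([::] : seq T) = [::] by case.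
have z0s : forall (t' : seq T), zip ([::] : seq S) t' = [::] by case.
elim: s t j => [|x s IH] [|y t] [|j] //=; rewrite ?drop0 ?zs0 ?z0s ?IH //.
by case: (drop j s).
Qed.

Section Paths.
Variables (R : realFieldType) (Sin : finType) (Sout : eqType) (n : nat)
  (G : layered_graph Sin n) (C : code Sout G) (w : seq Sout) (eps : R).
Hypothesis hw : size w = n.
Local Open Scope ring_scope.



Lemma vend_rcons q a : vend G (rcons q a) = Defs.next (vend G q) a.
Proof. by rewrite /vend foldl_rcons. Qed.

Lemma layer_vend p : (size p <= n)%N -> layer (vend G p) = size p.
Proof.
elim/last_ind: p => [|q a IH]; first by rewrite /vend /= layer_root.
rewrite size_rcons => h; rewrite vend_rcons layer_next IH ?(ltnW h) //.
Qed.

Lemma size_enc_from v p : size (enc_from C v p) = size p.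
Proof. by elim: p v => //= a p IH v; rewrite IH. Qed.

Lemma enc_rcons q a : enc C (rcons q a) = rcons (enc C q) (C (vend G q) a).
Proof.
rewrite /enc /vend; elim: q (Defs.root G) => //= b q IH v; by rewrite IH.
Qed.

Definition dl (p : seq Sin) : seq R :=
  [seq (xy.1 != xy.2)%:R - (1 - eps) | xy <- zip (enc C p) (take (size p) w)].
Definition dd v i a : R := (C v a != nth (C v a) w i)%:R - (1 - eps).
Definition Ap p := Afold (dl p).

Lemma dl_rcons q a : (size q < n)%N ->
  dl (rcons q a) = rcons (dl q) (dd (vend G q) (size q) a).
Proof.
move=> h; rewrite /dl size_rcons (take_nth (C (vend G q) a)) ?hw //.
rewrite enc_rcons zip_rcons ?map_rcons //.
by rewrite /enc size_enc_from size_takel // hw ltnW.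
Qed.

Lemma size_dl p : (size p <= n)%N -> size (dl p) = size p.
Proof.
move=> h; rewrite /dl size_map size_zip /enc size_enc_from size_takel ?hw //.
by rewrite minnn.
Qed.

Lemma sum_map_count (z : seq (Sout * Sout)) :
  \sum_(x <- [seq (xy.1 != xy.2)%:R - (1 - eps) | xy <- z]) x =
  (count (fun xy : Sout * Sout => xy.1 != xy.2) z)%:R - (1 - eps) * (size z)%:R.
Proof.
elim: z => [|xy z IH]; first by rewrite big_nil mulr0 subr0.
rewrite /= big_cons IH -(addn1 (size z)) !natrD mulrDr mulr1; lra.
Qed.

Lemma good_iff p : (0 < size p <= n)%N ->
  (good_path C w eps p <-> Ap p < 0).
Proof.
case/andP=> h0 hn.
rewrite /good_path /Ap A_neg ?size_dl //.
rewrite /sfx_dist.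
have hx : size (enc C p) = size p by rewrite /enc size_enc_from.
have hy : size (take (size p) w) = size p by rewrite size_takel ?hw.
have Hs j : (j < size p)%N -> \sum_(x <- drop j (dl p)) x =
   (hamming (drop j (enc C p)) (drop j (take (size p) w)))%:R
     - (1 - eps) * (size p - j)%:R.
  move=> hj; rewrite /dl -map_drop drop_zip sum_map_count /hamming size_zip !size_drop hx hy.
  by rewrite minnn.
have Hf j : (j < size p)%N ->
   ((hamming (drop j (enc C p)) (drop j (take (size p) w)))%:R
      / (size (enc C p) - j)%:R < 1 - eps) = (\sum_(x <- drop j (dl p)) x < 0).
  move=> hj; rewrite Hs // hx ltr_pdivrMr ?ltr0n ?subn_gt0 // subr_lt0 mulrC //.
rewrite bigmax_ltP ?hx //; last by move=> i; rewrite divr_ge0 ?ler0n.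
split.
  move=> H j hj; rewrite -Hf // hx; exact: (H (Ordinal hj)).
move=> H i; have := Hf i (ltn_ord i); rewrite hx => ->; exact: H.
Qed.


Fixpoint paths k : seq (seq Sin) :=
  if k is k'.+1 then [seq rcons q a | q <- paths k', a <- enum Sin] else [:: [::]].

Lemma mem_paths k q : (q \in paths k) = (size q == k).
Proof.
elim: k q => [|k IH] q; first by case: q.
apply/allpairsP/eqP.
  by case=> [[q' a]] /= [h1 _ ->]; rewrite size_rcons; move: h1; rewrite IH => /eqP->.
case/lastP: q => [//|q a]; rewrite size_rcons => -[hq].
by exists (q, a); split => //=; rewrite ?IH ?hq ?mem_enum.
Qed.

Fixpoint pickmin (s : seq (seq Sin)) : seq Sin :=
  match s with
  | [::] => [::]
  | c :: s' => match s' with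
               | [::] => c
               | _ => if Ap c <= Ap (pickmin s') then c else pickmin s'
               end
  end.

Lemma pickmin_in s : s != [::] -> pickmin s \in s.
Proof.
elim: s => [//|c s IH] _ /=.
case: s IH => [|c' s] IH; first by rewrite inE.
case: ifP => _; first by rewrite inE eqxx.
by rewrite inE IH ?orbT.
Qed.

Lemma pickmin_le s c : c \in s -> Ap (pickmin s) <= Ap c.
Proof.
elim: s => [//|c0 s IH] /=.
case: s IH => [|c' s] IH; first by rewrite inE => /eqP->.
rewrite inE => /orP[/eqP->|hc]; case: ifP => h //.
- by rewrite leNgt; apply/negP => h'; move: h; rewrite (ltW h').
- apply: le_trans h (IH hc).
- exact: IH.
Qed.

Fixpoint best k (u : vtx G) : seq Sin :=
  if k is k'.+1 then
    pickmin [seq c <- [seq rcons (best k' (vend G q)) a | q <- paths k', a <- enum Sin]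
              | decP (vend G c = u)]
  else [::].

Definition reach k u := exists p, size p = k /\ vend G p = u.

Lemma best1 k u : reach k u -> size (best k u) = k /\ vend G (best k u) = u.
Proof.
elim: k u => [|k IH] u [p [hs hv]].
  by move: hv; rewrite (size0nil hs) => <-.
move: hs hv; case/lastP: p => [//|q a]; rewrite size_rcons => -[hq] hv.
have [h1 h2] := IH (vend G q) (ex_intro _ q (conj hq erefl)).
set L := [seq rcons (best k (vend G q0)) a0 | q0 <- paths k, a0 <- enum Sin].
have c0in : rcons (best k (vend G q)) a \in [seq c <- L | decP (vend G c = u)].
  rewrite mem_filter; apply/andP; split.
    by apply/decPP; rewrite vend_rcons h2 -vend_rcons.
  by apply: allpairs_f; rewrite ?mem_paths ?hq ?mem_enum.
have : best k.+1 u \in [seq c <- L | decP (vend G c = u)].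
  by apply: pickmin_in; case: [seq c <- L | _] c0in.
rewrite mem_filter => /andP[/decPP hv' /allpairsP [[q' a']] /= [hq' _ E]].
rewrite E; split; first last.
  by rewrite -E.
rewrite size_rcons; move: hq'; rewrite mem_paths => /eqP hq'.
by have [-> _] := IH (vend G q') (ex_intro _ q' (conj hq' erefl)).
Qed.

Lemma best_os k u : reach k.+1 u ->
  exists c a, best k.+1 u = rcons c a /\ c = best k (vend G c) /\ size c = k.
Proof.
move=> hr; have [hs hv] := best1 hr.
move: hr => [p [hps hpv]].
move: hps hpv; case/lastP: p => [//|q a]; rewrite size_rcons => -[hq] hpv.
have [h1 h2] := best1 (ex_intro _ q (conj hq erefl)).
set L := [seq rcons (best k (vend G q0)) a0 | q0 <- paths k, a0 <- enum Sin].
have c0in : rcons (best k (vend G q)) a \in [seq c <- L | decP (vend G c = u)].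
  rewrite mem_filter; apply/andP; split.
    by apply/decPP; rewrite vend_rcons h2 -vend_rcons.
  by apply: allpairs_f; rewrite ?mem_paths ?hq ?mem_enum.
have : best k.+1 u \in [seq c <- L | decP (vend G c = u)].
  by apply: pickmin_in; case: [seq c <- L | _] c0in.
rewrite mem_filter => /andP[_ /allpairsP [[q' a']] /= [hq' _ ->]].
move: hq'; rewrite mem_paths => /eqP hq'.
have [h1' h2'] := best1 (ex_intro _ q' (conj hq' erefl)).
by exists (best k (vend G q')), a'; rewrite h2'.
Qed.

Lemma pos0_le (x y : R) : x <= y -> pos0 x <= pos0 y.
Proof.
rewrite /pos0 => h; case: ifP => hx; case: ifP => hy //.
- by rewrite leNgt hy.
- by move: (le_lt_trans h hy); rewrite hx.
Qed.

Lemma best2 k u p : (k <= n)%N -> size p = k -> vend G p = u -> Ap (best k u) <= Ap p.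
Proof.
elim: k u p => [|k IH] u p hk hs hv.
  by rewrite (size0nil hs).
move: hs hv; case/lastP: p => [//|q a]; rewrite size_rcons => -[hq] hv.
have [h1 h2] := best1 (ex_intro _ q (conj hq erefl)).
set L := [seq rcons (best k (vend G q0)) a0 | q0 <- paths k, a0 <- enum Sin].
have c0in : rcons (best k (vend G q)) a \in [seq c <- L | decP (vend G c = u)].
  rewrite mem_filter; apply/andP; split.
    by apply/decPP; rewrite vend_rcons h2 -vend_rcons.
  by apply: allpairs_f; rewrite ?mem_paths ?hq ?mem_enum.
apply: le_trans (pickmin_le c0in) _.
have hkn : (k < n)%N by [].
rewrite /Ap !dl_rcons ?h1 ?hq // !Afold_rcons h2 lerD2l.
apply: pos0_le; apply: IH => //; exact: ltnW.
Qed.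

Lemma best3 k u j : reach k u -> (j <= k)%N ->
  take j (best k u) = best j (vend G (take j (best k u))).
Proof.
elim: k u j => [|k IH] u j hr hj.
  by move: hj; rewrite leqn0 => /eqP->.
have [hs hv] := best1 hr.
move: hj; rewrite leq_eqVlt ltnS => /orP[/eqP->|hj].
  by rewrite take_oversize ?hs // hv.
have [c [a [E [Ec hc]]]] := best_os hr.
rewrite E -cats1 takel_cat ?hc //.
have := IH (vend G c) j (ex_intro _ c (conj hc erefl)) hj.
by rewrite -Ec.
Qed.

End Paths.

Theorem lemma5p4 (R : realFieldType) (Sin : finType) (Sout : eqType) (n : nat)
  (G : layered_graph Sin n) (C : code Sout G) (w : seq Sout) (eps : R) :
  size w = n -> (0 < eps)%R ->
  forall S : vtx G -> Prop,
    (forall v, S v -> inL C w eps v) ->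
    exists P : vtx G -> seq Sin, prefix_tree C w eps S P.
Proof.
move=> hw heps S HS.
have Hv : forall v, S v -> [/\ reach (layer v) v, (0 < layer v)%N, (layer v <= n)%N &
   exists p, [/\ size p = layer v, vend G p = v & good_path C w eps p]].
  move=> v /HS [i [/andP[hi1 hi2] [p [hs [hv hg]]]]].
  have hl : layer v = i by rewrite -hv layer_vend // hs.
  rewrite hl; split => //; [by exists p | by exists p].
exists (fun v => best C w eps (layer v) v).
have H1 : forall v q, S v -> prefix q (best C w eps (layer v) v) ->
    q = best C w eps (size q) (vend G q) /\ (size q <= n)%N.
  move=> v q /Hv [hr _ hn _] hp.
  have [hs _] := best1 C w eps hr.
  have hq : (size q <= layer v)%N by rewrite -hs; exact: size_prefix.
  move: hp; rewrite prefixE => /eqP E.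
  split; last exact: leq_trans hq hn.
  by have := best3 C w eps hr hq; rewrite E.
have Hu : forall p, path_in_union S (fun v => best C w eps (layer v) v) p ->
    p = best C w eps (size p) (vend G p) /\ (size p <= n)%N.
  elim/last_ind => [|q a IH] hp; first by split.
  have hq : path_in_union S (fun v => best C w eps (layer v) v) q.
    move=> q' a' h; apply: hp; exact: prefix_trans h (prefix_rcons q a).
  have [Eq hqn] := IH hq.
  have [v [hSv [q' [hp' hv']]]] := hp q a (prefix_refl _).
  have [Eq' hq'n] := H1 v q' hSv (prefix_trans (prefix_rcons q' a) hp').
  have hsz : size q = size q' by rewrite -(layer_vend G hqn) -(layer_vend G hq'n) hv'.
  have qq : q = q' by rewrite Eq Eq' hsz hv'.
  rewrite qq; exact: H1 v _ hSv hp'.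
split.
  move=> v hSv; have [hr h0 hn [p [hs hv hg]]] := Hv v hSv.
  have [hs' hv'] := best1 C w eps hr.
  split => //.
  have G1 : (0 < size (best C w eps (layer v) v) <= n)%N by rewrite hs' h0 hn.
  apply: (good_iff C eps hw G1).2.
  apply: le_lt_trans (best2 C eps hw hn hs hv) _.
  have G2 : (0 < size p <= n)%N by rewrite hs h0 hn.
  exact: (good_iff C eps hw G2).1.
move=> p1 p2 h1 h2 he.
have [E1 n1] := Hu p1 h1; have [E2 n2] := Hu p2 h2.
have hsz : size p1 = size p2 by rewrite -(layer_vend G n1) -(layer_vend G n2) he.
by rewrite E1 E2 hsz he.
Qed.
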